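(* For every integer $k\ge 2$, the Zielonka graph $\vec Z_k$ is splitable: there is an oriented graph $\vec T$ on $k\cdot 2^{k-2}$ vertices such that $\vec Z_k$ is isomorphic to the anti-twinned graph $R(\vec T)$.
   Context: For $k\ge 1$ the Zielonka graph $\vec Z_k$ has vertex set $S_1\cup\dots\cup S_k$, where $S_i$ is the set of $k$-tuples $x=(x^1,\dots,x^k)$ with $x^i=*$ and $x^j\in\{0,1\}$ for $j\neq i$ (so $\vec Z_k$ has $k\cdot 2^{k-1}$ vertices). For $x\in S_i$ and $y\in S_j$ with $i\neq j$, there is an arc $xy$ if and only if either ($i<j$ and $x^j=y^i$) or ($i>j$ and $x^j\neq y^i$); there are no other arcs. Given an oriented graph $\vec T$ with vertex set $\{v_1,\dots,v_n\}$, its anti-twinned graph $R(\vec T)$ is the oriented graph with vertex set $\{v_1,\dots,v_n\}\cup\{v_1',\dots,v_n'\}$ and arc set $\{v_iv_j,\ v_i'v_j',\ v_jv_i',\ v_j'v_i : v_iv_j\text{ an arc of }\vec T\}$. An oriented graph is splitable if it is isomorphic to $R(\vec T)$ for some oriented graph $\vec T$. *)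

(* Defs.v *)
From mathcomp Require Import all_boot.
Set Implicit Arguments. Unset Strict Implicit. Unset Printing Implicit Defensive.

(* A k-tuple over {0,1,*}: coordinate j is [Some b] for b in {0,1}, [None] for *. *)
Definition ztuple (k : nat) := {ffun 'I_k -> option bool}.

Definition zvalid (k : nat) (x : ztuple k) : bool :=
  #|[pred j | x j == None]| == 1.

Definition zvert (k : nat) := {x : ztuple k | zvalid x}.

Definition zarc (k : nat) (x y : zvert k) : bool :=
  [exists i : 'I_k, exists j : 'I_k,
     [&& (val x i == None), (val y j == None), (i != j) &
      (((i < j)%N && (val x j == val y i)) || ((j < i)%N && (val x j != val y i)))]].

Definition oriented (V : finType) (e : rel V) : Prop :=
  (forall v, ~~ e v v) /\ (forall u v, e u v -> ~~ e v u).

(* Anti-twinned graph R(T): vertices inl v_i (= v_i) and inr v_i (= v_i');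
   arcs v_i v_j, v_i' v_j', v_j v_i', v_j' v_i for each arc v_i v_j of T. *)
Definition antitwin (V : finType) (e : rel V) : rel (V + V) :=
  fun a b =>
    match a, b with
    | inl i, inl j => e i j
    | inr i, inr j => e i j
    | inl j, inr i => e i j
    | inr j, inl i => e i j
    end.

(* Main.v *)
Require Import Defs.
From mathcomp Require Import all_boot zify.
Set Implicit Arguments. Unset Strict Implicit. Unset Printing Implicit Defensive.

Section Abs.
Variables (V : finType) (e : rel V) (s : V -> V) (rep : pred V) (N : nat).
Hypotheses (sK : involutive s) (es : forall x y, e (s x) (s y) = e x y)
  (reps : forall x, rep (s x) = ~~ rep x) (key : forall a b, e a (s b) = e b a)
  (eor : oriented e) (card : #|V| = N + N).

Definition S := {x : V | rep x}.

Lemma cardS : #|{: S}| = N.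
Proof.
rewrite card_sig.
have h1 : #|V| = #|[pred x | rep x]| + #|[predC [pred x | rep x]]| by rewrite cardC.
have h2 : #|[predC [pred x | rep x]]| = #|[pred x | rep x]|.
  rewrite -(card_image (inv_inj sK)).
  apply: eq_card => x; rewrite !inE.
  apply/idP/idP.
    case/imageP => y; rewrite inE => ry ->; by rewrite reps ry.
  move=> rx; apply/imageP; exists (s x); rewrite ?inE ?reps ?sK //.
  by rewrite negbK.
move: card; rewrite h1 h2 => hh; lia.
Qed.

Definition r (a : S) : 'I_N := cast_ord cardS (enum_rank a).
Definition h (i : 'I_N) : V := val (enum_val (cast_ord (esym cardS) i)).
Lemma hrep i : rep (h i). Proof. exact: valP. Qed.
Lemma rK a : h (r a) = val a.
Proof. by rewrite /h /r cast_ordK enum_rankK. Qed.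
Lemma hK i : r (enum_val (cast_ord (esym cardS) i)) = i.
Proof. by rewrite /r enum_valK cast_ordKV. Qed.

Definition c x := if rep x then x else s x.
Lemma repc x : rep (c x). Proof. rewrite /c; case: ifP => //; by rewrite reps => ->. Qed.

Definition f x : 'I_N + 'I_N :=
  if rep x then inl (r (exist _ (c x) (repc x))) else inr (r (exist _ (c x) (repc x))).
Definition g (u : 'I_N + 'I_N) : V := match u with inl i => h i | inr i => s (h i) end.

Lemma fK : cancel f g.
Proof. move=> x; rewrite /f /g; case: ifP => rx; rewrite rK /= /c rx //. Qed.

Lemma hval i a : h i = val a -> r a = i.
Proof.
move=> e1; rewrite -(hK i); congr r; apply: val_inj; exact: esym.
Qed.

Lemma gK : cancel g f.
Proof.
case=> i /=; rewrite /f.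
  rewrite hrep; congr inl; apply: hval => /=; by rewrite /c hrep.
rewrite reps hrep /=; congr inr; apply: hval => /=; by rewrite /c reps hrep /= sK.
Qed.

Definition T (i j : 'I_N) := e (h i) (h j).

Lemma garc u v : e (g u) (g v) = antitwin T u v.
Proof.
case: u => i; case: v => j //=; rewrite /T ?es ?key //.
by rewrite -es sK key.
Qed.

Lemma absmain : exists T : rel 'I_N, oriented T /\
  exists f : V -> 'I_N + 'I_N, bijective f /\ forall x y, e x y = antitwin T (f x) (f y).
Proof.
exists T; split.
  case: eor => h1 h2; split => [v|u v]; rewrite /T; [exact: h1|exact: h2].
exists f; split; first by exists g; [exact: fK|exact: gK].
by move=> x y; rewrite -garc !fK.
Qed.
End Abs.

Section Z.
Variable k : nat.

Lemma none_uniq (x : zvert k) i j : val x i = None -> val x j = None -> i = j.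
Proof.
case: x => x /= /card1P [a ha] hi hj.
have := ha i; have := ha j; rewrite !inE hi hj /= => /esym/eqP -> /esym/eqP -> //.
Qed.

Lemma none_ex (x : zvert k) : exists i, val x i = None.
Proof.
case: x => x /= /card1P [a ha]; exists a; have := ha a; rewrite !inE eqxx => /eqP //.
Qed.

Definition fl (x : ztuple k) : ztuple k := [ffun j => omap negb (x j)].
Lemma fl_valid x : zvalid x -> zvalid (fl x).
Proof.
rewrite /zvalid => hx; rewrite (eq_card (B := [pred j | x j == None])) //.
by move=> j; rewrite !inE ffunE; case: (x j).
Qed.
Definition zs (x : zvert k) : zvert k := exist _ (fl (val x)) (fl_valid (valP x)).
Lemma zsE x j : val (zs x) j = omap negb (val x j).
Proof. by rewrite /= ffunE. Qed.

Lemma zsK : involutive zs.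
Proof. move=> x; apply: val_inj; apply/ffunP => j; rewrite zsE zsE; by case: (val x j) => // -[]. Qed.

Lemma omap_eq (a b : option bool) : (omap negb a == omap negb b) = (a == b).
Proof. by case: a => [[]|]; case: b => [[]|]. Qed.

Lemma zarc_s x y : zarc (zs x) (zs y) = zarc x y.
Proof.
apply/existsP/existsP => -[i /existsP [j H]]; exists i; apply/existsP; exists j;
 move: H; rewrite !zsE !omap_eq; by case: (val x i); case: (val y j).
Qed.

Lemma zarc_key a b : zarc a (zs b) = zarc b a.
Proof.
apply/existsP/existsP => -[i /existsP [j /and4P [hi hj hij H]]]; exists j; apply/existsP; exists i;
 rewrite ?zsE in hi hj H *; apply/and4P; split => //; try by rewrite eq_sym.
- by case: (val b j) hj.
- move: hj => /eqP; case E: (val b j) => //= _.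
  case Ea: (val a j) => [u|]; last by move: (none_uniq (eqP hi) Ea) hij => ->; rewrite eqxx.
  case Eb: (val b i) => [v|]; last by move: (none_uniq Eb E) hij => ->; rewrite eqxx.
  move: H; rewrite Ea Eb /=; clear Ea Eb; case: (ltngtP i j) => //= _; by case: u; case: v.
- by move: hi; case: (val b i).
- move: hj => /eqP E.
  case Ea: (val a i) => [u|]; last by move: (none_uniq Ea E) hij => ->; rewrite eqxx.
  case Eb: (val b j) => [v|]; last by move: (none_uniq (eqP hi) Eb) hij => ->; rewrite eqxx.
  move: H; rewrite Ea Eb /=; clear Ea Eb; case: (ltngtP i j) => //= _; by case: u; case: v.
Qed.

Lemma zarc_or : oriented (@zarc k).
Proof.
split.
  move=> v; apply/negP => /existsP [i /existsP [j /and4P [hi hj hij _]]].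
  by move: (none_uniq (eqP hi) (eqP hj)) hij => ->; rewrite eqxx.
move=> u v /existsP [i /existsP [j /and4P [hi hj hij H]]]; apply/negP
  => /existsP [i' /existsP [j' /and4P [hi' hj' hij' H']]].
move: (none_uniq (eqP hi) (eqP hj')) (none_uniq (eqP hj) (eqP hi')) => Ei Ej; subst i' j'.
move: H H'; case: (ltngtP i j) => //= _; rewrite eq_sym; by case: eqP.
Qed.
End Z.

Section Z2.
Variable m : nat.
Notation k := m.+2.
Definition o1 : 'I_k := @Ordinal k 1 isT.
Definition o0 : 'I_k := ord0.

Definition zrep (x : zvert k) : bool :=
  (val x o0 == Some false) || ((val x o0 == None) && (val x o1 == Some false)).

Lemma zrep_s (x : zvert k) : zrep (zs x) = ~~ zrep x.
Proof.
rewrite /zrep !zsE.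
case E0: (val x o0) => [b|] /=; first by clear E0; case: b.
case E1: (val x o1) => [c|] /=; first by clear E1; case: c.
by have := none_uniq E0 E1.
Qed.

Definition FF (p : 'I_k * {ffun 'I_m.+1 -> bool}) : ztuple k :=
  [ffun j => omap p.2 (unlift p.1 j)].
Lemma FF_valid p : zvalid (FF p).
Proof.
rewrite /zvalid; apply/card1P; exists p.1 => j; rewrite !inE ffunE.
case: unliftP => [j'|] -> /=; rewrite ?eqxx //.
by have := neq_lift p.1 j'; rewrite eq_sym => /negbTE ->.
Qed.
Definition F p : zvert k := exist _ (FF p) (FF_valid p).

Lemma F_inj : injective F.
Proof.
move=> [i g] [i' g'] /(congr1 val) /= E.
have Ei : i = i'.
  have := congr1 (fun f : ztuple k => f i) E; rewrite /= !ffunE unlift_none /=.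
  by case: unliftP => [j' ->|//].

subst i'; congr pair; apply/ffunP => j'.
have := congr1 (fun f : ztuple k => f (lift i j')) E; rewrite /= !ffunE liftK /=.
by case.
Qed.

Definition star (x : zvert k) : 'I_k := odflt ord0 [pick j | sval x j == None].
Lemma starP (x : zvert k) : val x (star x) = None.
Proof.
rewrite /star; case: pickP => [j /eqP //|H]; case: (none_ex x) => i hi.
by have := H i; rewrite hi eqxx.
Qed.

Definition G (x : zvert k) : 'I_k * {ffun 'I_m.+1 -> bool} :=
  (star x, [ffun j' => val x (lift (star x) j') == Some true]).

Lemma G_inj : injective G.
Proof.
move=> x y [Es Ef]; apply: val_inj; apply/ffunP => j.
case: (unliftP (star x) j) => [j' ->|->]; last by rewrite starP Es starP.
have := congr1 (fun f : {ffun 'I_m.+1 -> bool} => f j') Ef; rewrite !ffunE -Es.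
case Ex: (val x (lift (star x) j')) => [b|]; last first.
  by have H := none_uniq Ex (starP x); move: (neq_lift (star x) j'); rewrite H eqxx.
case Ey: (val y (lift (star x) j')) => [c|]; last first.
  by have H := none_uniq Ey (starP y); move: (neq_lift (star x) j'); rewrite H -Es eqxx.
by case: b {Ex}; case: c {Ey}.
Qed.

Lemma card_zvert : #|{: zvert k}| = k * 2 ^ (k - 2) + k * 2 ^ (k - 2).
Proof.
have -> : #|{: zvert k}| = #|{: 'I_k * {ffun 'I_m.+1 -> bool}}|.
  apply/eqP; rewrite eqn_leq; apply/andP; split.
    exact: leq_card G_inj.
  exact: leq_card F_inj.
rewrite card_prod card_ord card_ffun card_bool card_ord.
have -> : (k - 2 = m)%N by lia.
rewrite expnS; lia.
Qed.
End Z2.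

Theorem mainTheorem7 (k : nat) (hk : (2 <= k)%N) :
  exists T : rel 'I_(k * 2 ^ (k - 2)),
    oriented T /\
    exists f : zvert k -> 'I_(k * 2 ^ (k - 2)) + 'I_(k * 2 ^ (k - 2)),
      bijective f /\ forall x y, zarc x y = antitwin T (f x) (f y).
Proof.
case: k hk => [|[|m]] // _.
apply: (absmain (s := @zs m.+2) (rep := @zrep m)).
- exact: zsK.
- exact: zarc_s.
- exact: zrep_s.
- exact: zarc_key.
- exact: zarc_or.
- exact: card_zvert.
Qed.
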